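(* Let $\epsilon\in\{0,\frac12\}$. Every 2-local automorphism of $\mathrm{SVir}[\epsilon]$ is an automorphism of $\mathrm{SVir}[\epsilon]$.
   Context: For $\epsilon\in\{0,\frac12\}$, the super Virasoro algebra $\mathrm{SVir}[\epsilon]$ is the Lie superalgebra over $\mathbb{C}$ with basis $\{L_m, G_r, C : m\in\mathbb{Z}, r\in\mathbb{Z}+\epsilon\}$, even part spanned by the $L_m$ and $C$, odd part spanned by the $G_r$, and brackets $[L_m,L_n]=(m-n)L_{m+n}+\frac{1}{12}\delta_{m+n,0}(m^3-m)C$, $[L_m,G_r]=(\frac m2-r)G_{m+r}$, $[G_r,G_s]=2L_{r+s}+\frac13\delta_{r+s,0}(r^2-\frac14)C$, with $C$ central. An automorphism is an even bijective linear map preserving the bracket. A map $\phi:L\to L$ (not assumed linear) is a 2-local automorphism if for all $x,y\in L$ there is an automorphism $\theta_{x,y}$ of $L$ with $\phi(x)=\theta_{x,y}(x)$ and $\phi(y)=\theta_{x,y}(y)$. *)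

(* Defs.v *)
From HB Require Import structures.
From mathcomp Require Import all_boot all_order all_algebra.
From mathcomp Require Import finmap monalg.
From mathcomp Require Import complex.
From mathcomp Require Import Rstruct.
From Stdlib Require Import Rdefinitions.

Set Implicit Arguments.
Unset Strict Implicit.
Unset Printing Implicit Defensive.

Import Order.TTheory GRing.Theory Num.Theory.
Local Open Scope ring_scope.

(* Basis of SVir[eps]:  SL m = L_m (m : int),
   SG k = G_{k + eps} (k : int; the half-integer shift eps is added below),
   SC = the central element C. *)
Inductive sbasis : Type := SL of int | SG of int | SC.

Definition sbasis_enc (b : sbasis) : (int + int) + unit :=
  match b with SL m => inl (inl m) | SG k => inl (inr k) | SC => inr tt end.
Definition sbasis_dec (c : (int + int) + unit) : sbasis :=
  match c with inl (inl m) => SL m | inl (inr k) => SG k | inr _ => SC end.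
Lemma sbasis_encK : cancel sbasis_enc sbasis_dec.
Proof. by case. Qed.
HB.instance Definition _ := Countable.copy sbasis (can_type sbasis_encK).

Definition SV : Type := {malg (complex Rdefinitions.R)[sbasis]}.

Definition sparity (b : sbasis) : bool := if b is SG _ then true else false.

(* Convention: eps : bool encodes epsilon, false <-> 0, true <-> 1/2.
   hshift eps is epsilon as a complex number. *)
Definition hshift (eps : bool) : complex Rdefinitions.R :=
  if eps then 2^-1 else 0.

Definition gidx (eps : bool) (k : int) : complex Rdefinitions.R :=
  k%:~R + hshift eps.

Definition sbr (eps : bool) (a b : sbasis) : SV :=
  match a, b with
  | SL m, SL n =>
      (m - n)%:~R *: << SL (m + n) >>
      + (if m + n == 0 then (m ^+ 3 - m)%:~R / 12%:R else 0) *: << SC >>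
  | SL m, SG k => (m%:~R / 2%:R - gidx eps k) *: << SG (m + k) >>
  | SG k, SL m => - ((m%:~R / 2%:R - gidx eps k) *: << SG (m + k) >>)
  | SG k, SG l =>
      2%:R *: << SL (k + l + (eps : nat)%:Z) >>
      + (if gidx eps k + gidx eps l == 0
         then (gidx eps k ^+ 2 - 4%:R^-1) / 3%:R else 0) *: << SC >>
  | _, _ => 0
  end.

Definition sbracket (eps : bool) (x y : SV) : SV :=
  \sum_(a <- msupp x) \sum_(b <- msupp y) (x@_a * y@_b) *: sbr eps a b.

Definition is_even (x : SV) : bool := all (fun b => ~~ sparity b) (msupp x).
Definition is_odd (x : SV) : bool := all sparity (msupp x).

Definition is_automorphism (eps : bool) (f : SV -> SV) : Prop :=
  [/\ (forall (c : complex Rdefinitions.R) (x y : SV), f (c *: x + y) = c *: f x + f y),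
      bijective f,
      (forall x, is_even x -> is_even (f x)) /\ (forall x, is_odd x -> is_odd (f x))
    & forall x y, f (sbracket eps x y) = sbracket eps (f x) (f y)].

Definition is_2local_automorphism (eps : bool) (phi : SV -> SV) : Prop :=
  forall x y : SV, exists theta : SV -> SV,
    is_automorphism eps theta /\ phi x = theta x /\ phi y = theta y.

(* Main.v *)
Require Import Defs.
From HB Require Import structures.
From mathcomp Require Import all_boot all_order all_algebra.
From mathcomp Require Import finmap monalg complex Rstruct.
From mathcomp Require Import ring lra zify.
Set Implicit Arguments.
Unset Strict Implicit.
Unset Printing Implicit Defensive.
Import Order.TTheory GRing.Theory Num.Theory.
Local Open Scope ring_scope.
Notation CC := (complex Rdefinitions.R).

Definition lin (F : sbasis -> SV) (y : SV) : SV :=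
  \sum_(b <- msupp y) y@_b *: F b.

Lemma linEw F y (d : {fset sbasis}) : (msupp y `<=` d)%fset ->
  lin F y = \sum_(b <- d) y@_b *: F b.
Proof.
move=> le; rewrite /lin (big_fset_incl _ le) // => b _ /mcoeff_outdom ->.
by rewrite scale0r.
Qed.

Lemma lin_lin F (c : CC) y z : lin F (c *: y + z) = c *: lin F y + lin F z.
Proof.
pose d := (msupp y `|` msupp z `|` msupp (c *: y + z))%fset.
have h1 : (msupp y `<=` d)%fset by rewrite /d -fsetUA fsubsetUl.
have h2 : (msupp z `<=` d)%fset.
  by rewrite /d -fsetUA fsetUA [(msupp y `|` _)%fset]fsetUC -fsetUA fsubsetUl.
have h3 : (msupp (c *: y + z) `<=` d)%fset by rewrite /d fsubsetUr.
rewrite (linEw F h1) (linEw F h2) (linEw F h3) scaler_sumr -big_split /=.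
apply: eq_bigr => b _; by rewrite mcoeffD mcoeffZ scalerDl scalerA.
Qed.

Lemma lin_U F b : lin F << b >> = F b.
Proof. by rewrite (linEw F msuppU_le) big_seq_fset1 mcoeffUU scale1r. Qed.

Lemma lin_Fadd F1 F2 y : lin (fun b => F1 b + F2 b) y = lin F1 y + lin F2 y.
Proof. by rewrite /lin -big_split /=; apply: eq_bigr => b _; rewrite scalerDr. Qed.

Lemma lin_Fscale (c : CC) F y : lin (fun b => c *: F b) y = c *: lin F y.
Proof.
rewrite /lin scaler_sumr; apply: eq_bigr => b _.
by rewrite !scalerA mulrC.
Qed.

Lemma lin_Fext F1 F2 y : F1 =1 F2 -> lin F1 y = lin F2 y.
Proof. by move=> h; rewrite /lin; apply: eq_bigr => b _; rewrite h. Qed.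

Lemma lin_coef F y e : (lin F y)@_e = \sum_(b <- msupp y) y@_b * (F b)@_e.
Proof. rewrite /lin raddf_sum; apply: eq_bigr => b _ /=. exact: mcoeffZ. Qed.

Lemma sbE eps x y : sbracket eps x y = lin (fun a => lin (sbr eps a) y) x.
Proof.
rewrite /sbracket /lin; apply: eq_bigr => a _; rewrite scaler_sumr.
by apply: eq_bigr => b _; rewrite scalerA.
Qed.

Lemma sb_linl eps (c : CC) x y z :
  sbracket eps (c *: x + y) z = c *: sbracket eps x z + sbracket eps y z.
Proof. by rewrite !sbE lin_lin. Qed.

Lemma sb_linr eps (c : CC) x y z :
  sbracket eps z (c *: x + y) = c *: sbracket eps z x + sbracket eps z y.
Proof.
rewrite !sbE.
transitivity (lin (fun a => c *: lin (sbr eps a) x + lin (sbr eps a) y) z).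
  by apply: lin_Fext => a; exact: lin_lin.
by rewrite lin_Fadd lin_Fscale.
Qed.

Lemma sbUU eps a b : sbracket eps << a >> << b >> = sbr eps a b.
Proof. by rewrite sbE !lin_U. Qed.

Lemma sb_coef eps x y e : (sbracket eps x y)@_e =
  \sum_(a <- msupp x) \sum_(b <- msupp y) x@_a * y@_b * (sbr eps a b)@_e.
Proof.
rewrite /sbracket raddf_sum; apply: eq_bigr => a _; rewrite raddf_sum.
by apply: eq_bigr => b _ /=; apply: mcoeffZ.
Qed.

Definition islin (f : SV -> SV) :=
  forall (c : CC) (x y : SV), f (c *: x + y) = c *: f x + f y.

Lemma lin0 f : islin f -> f 0 = 0.
Proof.
move=> h; have := h 1 0 0; rewrite !scale1r addr0.
by move=> /(congr1 (fun v => v - f 0)); rewrite subrr addrK => <-.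
Qed.

Lemma linD f : islin f -> forall x y, f (x + y) = f x + f y.
Proof. by move=> h x y; have := h 1 x y; rewrite !scale1r. Qed.

Lemma linZ f : islin f -> forall (c : CC) x, f (c *: x) = c *: f x.
Proof. by move=> h c x; rewrite -[c *: x]addr0 h (lin0 h) addr0. Qed.

Lemma linN f : islin f -> forall x, f (- x) = - f x.
Proof. by move=> h x; rewrite -scaleN1r (linZ h) scaleN1r. Qed.

Lemma linB f : islin f -> forall x y, f (x - y) = f x - f y.
Proof. by move=> h x y; rewrite (linD h) (linN h). Qed.

Lemma lin_sum f (I : Type) (r : seq I) (G : I -> SV) : islin f ->
  f (\sum_(i <- r) G i) = \sum_(i <- r) f (G i).
Proof. move=> h; exact: (big_morph f (linD h) (lin0 h)). Qed.

Lemma malgUZ (c : CC) k : << c *g k >> = c *: (<< k >> : SV).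
Proof. by apply/malgP => e; rewrite mcoeffZ !mcoeffU mulr_natr. Qed.

Lemma linE f : islin f -> forall y, f y = lin (fun b => f << b >>) y.
Proof.
move=> h y; have -> : f y = f (\sum_(k <- msupp y) << y@_k *g k >>).
  by rewrite -monalgE.
rewrite (lin_sum _ _ h) /lin; apply: eq_bigr => b _.
by rewrite malgUZ (linZ h).
Qed.

Lemma lin_coefE f : islin f -> forall y e,
  (f y)@_e = \sum_(b <- msupp y) y@_b * (f << b >>)@_e.
Proof. by move=> h y e; rewrite (linE h) lin_coef. Qed.

Definition lam eps (b : sbasis) : CC :=
  match b with SL n => - n%:~R | SG k => - gidx eps k | SC => 0 end.

Lemma sbr_L0 eps b : sbr eps (SL 0) b = lam eps b *: << b >>.
Proof.
case: b => [n|k|]; rewrite /sbr /lam.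
- rewrite (add0r n) (sub0r n) intrN.
  have -> : ((0:int) ^+ 3 - 0) = 0 by [].
  by case: ifP => _; rewrite ?mul0r scale0r addr0.
- rewrite (add0r k) mul0r sub0r.
  done.
- by rewrite scale0r.
Qed.

Lemma lin_coefw F y e (d : {fset sbasis}) : (msupp y `<=` d)%fset ->
  (lin F y)@_e = \sum_(b <- d) y@_b * (F b)@_e.
Proof.
move=> le; rewrite (linEw _ le) raddf_sum; apply: eq_bigr => b _ /=; exact: mcoeffZ.
Qed.

Lemma coef_diag (G : sbasis -> CC) (v : SV) e :
  (lin (fun b => G b *: << b >>) v)@_e = G e * v@_e.
Proof.
have le : (msupp v `<=` msupp v `|` [fset e])%fset by rewrite fsubsetUl.
have ed : e \in (msupp v `|` [fset e])%fset by rewrite in_fsetU in_fset1 eqxx orbT.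
rewrite (lin_coefw _ _ le) (big_fsetD1 e ed).
rewrite big1_fset /=.
  by rewrite addr0 mcoeffZ mcoeffUU mulr1 mulrC.
move=> k; rewrite in_fsetD1 => /andP [ke _] _.
by rewrite mcoeffZ mcoeffU (negbTE ke) mulr0 mulr0.
Qed.

Lemma sbL0E eps v : sbracket eps << SL 0 >> v = lin (fun b => lam eps b *: << b >>) v.
Proof.
rewrite sbE lin_U; apply: lin_Fext => b; exact: sbr_L0.
Qed.

Lemma sbL0_coef eps v e : (sbracket eps << SL 0 >> v)@_e = lam eps e * v@_e.
Proof. by rewrite sbL0E coef_diag. Qed.

Lemma sbC eps v : sbracket eps << SC >> v = 0.
Proof.
rewrite sbE lin_U /lin big1 // => b _ /=; by rewrite scaler0.
Qed.

Lemma even_coef x e : is_even x -> sparity e -> x@_e = 0.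
Proof.
move=> /allP h pe; apply: mcoeff_outdom; apply/negP => /h.
by rewrite pe.
Qed.

Lemma odd_coef x e : is_odd x -> ~~ sparity e -> x@_e = 0.
Proof.
move=> /allP h pe; apply: mcoeff_outdom; apply/negP => /h.
by rewrite (negbTE pe).
Qed.

Lemma msuppUb b : msupp (<< b >> : SV) = [fset b]%fset.
Proof. by rewrite msuppU oner_eq0. Qed.

Lemma even_U b : ~~ sparity b -> is_even << b >>.
Proof. by move=> h; apply/allP => e; rewrite msuppUb in_fset1 => /eqP ->. Qed.

Lemma odd_U b : sparity b -> is_odd << b >>.
Proof. by move=> h; apply/allP => e; rewrite msuppUb in_fset1 => /eqP ->. Qed.

Definition shift (b : sbasis) (j : int) : sbasis :=
  match b with SL m => SL (m + j) | SG k => SG (k + j) | SC => SC end.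

Definition deg eps (b : sbasis) : int :=
  match b with SL m => 2 * m | SG k => 2 * k + (eps : nat)%:Z | SC => 0 end.

Definition kappa eps (n : int) (b : sbasis) : CC :=
  match b with SL m => (n - m)%:~R | SG k => n%:~R / 2%:R - gidx eps k | SC => 0 end.

Lemma sbrLL eps n m : sbr eps (SL n) (SL m) =
  (n - m)%:~R *: << SL (n + m) >> +
  (if n + m == 0 then (n ^+ 3 - n)%:~R / 12%:R else 0) *: << SC >> :> SV.
Proof. reflexivity. Qed.
Lemma sbrLG eps n k : sbr eps (SL n) (SG k) =
  (n%:~R / 2%:R - gidx eps k) *: << SG (n + k) >> :> SV.
Proof. reflexivity. Qed.
Lemma sbrGL eps n k : sbr eps (SG k) (SL n) =
  - ((n%:~R / 2%:R - gidx eps k) *: << SG (n + k) >>) :> SV.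
Proof. reflexivity. Qed.
Lemma sbrGG eps k l : sbr eps (SG k) (SG l) =
      2%:R *: << SL (k + l + (eps : nat)%:Z) >>
      + (if gidx eps k + gidx eps l == 0
         then (gidx eps k ^+ 2 - 4%:R^-1) / 3%:R else 0) *: << SC >> :> SV.
Proof. reflexivity. Qed.
Lemma sbrC eps b : sbr eps SC b = 0.
Proof. by case: b. Qed.
Lemma sbrLC eps n : sbr eps (SL n) SC = 0.
Proof. by []. Qed.
Lemma sbrGC eps n : sbr eps (SG n) SC = 0.
Proof. by []. Qed.

Lemma coef_1 (a : CC) b e : ((a *: << b >>) : SV)@_e = a * (b == e)%:R.
Proof. by rewrite !mcoeffZ !mcoeffU. Qed.
Lemma coef_2 (a c : CC) b b' e : ((a *: << b >> + c *: << b' >>) : SV)@_e =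
  a * (b == e)%:R + c * (b' == e)%:R.
Proof. rewrite mcoeffD. rewrite -[a * _]coef_1. rewrite -[c * _]coef_1. done. Qed.
Lemma sbrL_coef eps n b e : e != SC ->
  (sbr eps (SL n) b)@_e = (e == shift b n)%:R * kappa eps n b.
Proof.
move=> eC; have eC' : (SC == e) = false by rewrite eq_sym (negbTE eC).
case: b => [m|k|].
- rewrite sbrLL coef_2 eC' mulr0 addr0 /shift /kappa.
  have -> : (e == SL (m + n)) = (SL (n + m) == e) by rewrite eq_sym addrC.
  by rewrite mulrC.
- rewrite sbrLG coef_1 /shift /kappa.
  have -> : (e == SG (k + n)) = (SG (n + k) == e) by rewrite eq_sym addrC.
  by rewrite mulrC.
- by rewrite sbrLC mcoeff0 mulr0.
Qed.

Lemma deg_shift eps b j : b != SC -> deg eps (shift b j) = deg eps b + 2 * j.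
Proof. case: b => [m|k|] //= _; lia. Qed.

Lemma shift_eq eps b0 b N n : b0 != SC -> shift b0 N = shift b n ->
  b != SC /\ deg eps b = deg eps b0 + 2 * (N - n).
Proof.
case: b0 => [m0|k0|] //= _; case: b => [m|k|] //= [] h; split => //; lia.
Qed.

Lemma shift_inj b0 b N : b0 != SC -> shift b0 N = shift b N -> b = b0.
Proof.
case: b0 => [m0|k0|] //= _; case: b => [m|k|] //= [] /addIr ->; done.
Qed.

Lemma kappa_eq0 eps n b : b != SC -> kappa eps n b = 0 ->
  deg eps b = 2 * n \/ deg eps b = n.
Proof.
case: b => [m|k|] //= _.
- move/eqP; rewrite intr_eq0 subr_eq0 => /eqP ->; by left.
- move=> h; right.
  have : ((n - (2 * k + (eps : nat)%:Z))%:~R : CC) = 0.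
    rewrite -[RHS](mulr0 2%:R) -h /gidx /hshift.
    rewrite !(intrD, intrB, intrM, intrN).
    by clear h; case: eps; rewrite /= ?intr1 ?mulr0z; field.
  by move/eqP; rewrite intr_eq0 subr_eq0 => /eqP ->.
Qed.

Lemma exists_max (T : eqType) (s : seq T) (P : pred T) (f : T -> int) :
  (exists2 x, x \in s & P x) ->
  exists x, [/\ x \in s, P x & forall y, y \in s -> P y -> f y <= f x].
Proof.
elim: s => [[x] //|a s IH [x xin Px]].
case: (boolP (has P s)) => [/hasP [y ys Py]|/hasPn none].
- have [m [ms Pm mmax]] := IH (ex_intro2 _ _ y ys Py).
  case: (boolP (P a && (f m < f a))) => [/andP [Pa lt]|h].
  + exists a; split => //; first by rewrite mem_head.
    move=> z; rewrite in_cons => /orP [/eqP -> //|zs Pz].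
    apply: le_trans (mmax z zs Pz) _; exact: ltW.
  + exists m; split => //; first by rewrite in_cons ms orbT.
    move=> z; rewrite in_cons => /orP [/eqP -> Pa|zs Pz]; last exact: mmax.
    by move: h; rewrite Pa /= -leNgt.
- move: xin; rewrite in_cons => /orP [/eqP xa|xs]; last by move: (none x xs); rewrite Px.
  exists a; split => //; first by rewrite mem_head.
    by rewrite -xa.
  move=> z; rewrite in_cons => /orP [/eqP -> //|zs Pz].
  by move: (none z zs); rewrite Pz.
Qed.


Lemma iaux1 (sg N d : int) : (sg = 1 \/ sg = -1) -> 0 < sg * N ->
  sg * (d + 2 * N) <= sg * d -> False.
Proof. by case=> ->; lia. Qed.

Lemma iaux2 (sg N n d : int) : (sg = 1 \/ sg = -1) -> 0 < sg * N ->
  sg * (d + 2 * (N - n)) <= sg * d -> 0 < sg * n.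
Proof. by case=> ->; lia. Qed.

Lemma iaux3 (sg N n d : int) : (sg = 1 \/ sg = -1) ->
  sg * (d + 2 * (N - n)) <= sg * d -> sg * n <= sg * N -> n = N.
Proof. by case=> ->; lia. Qed.

Lemma iaux4 (sg N d : int) : (sg = 1 \/ sg = -1) -> 0 < sg * N ->
  2 * (sg * N) < sg * d -> d = 2 * N \/ d = N -> False.
Proof. by case=> ->; lia. Qed.

Lemma top_arg eps (x v : SV) (mu : CC) (sg N : int) :
  (sg = 1 \/ sg = -1) -> is_even x -> SL N \in msupp x -> 0 < sg * N ->
  (forall n, SL n \in msupp x -> 0 < sg * n -> sg * n <= sg * N) ->
  sbracket eps x v = mu *: v ->
  forall b, b \in msupp v -> b != SC -> sg * deg eps b <= 2 * (sg * N).
Proof.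
move=> hsg xe hN hN0 hmax hv b bv bC.
rewrite leNgt; apply/negP => hb.
have [b0 [b0v b0C b0max]] := @exists_max _ (msupp v) (fun b => b != SC)
   (fun b => sg * deg eps b) (ex_intro2 _ _ b bv bC).
have hb0 : 2 * (sg * N) < sg * deg eps b0 := lt_le_trans hb (b0max b bv bC).
have eC : shift b0 N != SC by case: (b0) b0C.
have degE : deg eps (shift b0 N) = deg eps b0 + 2 * N := deg_shift eps N b0C.
have ev : v@_(shift b0 N) = 0.
  apply: mcoeff_outdom; apply/negP => ein.
  have := b0max _ ein eC; rewrite degE; exact: iaux1.
have h1 : (sbracket eps x v)@_(shift b0 N) = 0 by rewrite hv mcoeffZ ev mulr0.
have h2 : (sbracket eps x v)@_(shift b0 N) =
    x@_(SL N) * v@_b0 * kappa eps N b0.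
  rewrite sb_coef (bigD1_seq (SL N)) ?fset_uniq //.
  rewrite (bigD1_seq b0) ?fset_uniq //.
  have -> : \sum_(i <- msupp v | i != b0)
      x@_(SL N) * v@_i * (sbr eps (SL N) i)@_(shift b0 N) = 0.
    apply: big1_seq => c /andP [cb0 cv]; rewrite sbrL_coef //.
    case: eqP => [h|_]; last by rewrite mul0r mulr0.
    by move: cb0; rewrite (shift_inj b0C h) eqxx.
  have -> : \sum_(i <- msupp x | i != SL N) \sum_(b1 <- msupp v)
      x@_i * v@_b1 * (sbr eps i b1)@_(shift b0 N) = 0.
    apply: big1_seq => a /andP [aN ax]; apply: big1_seq => c /andP [_ cv].
    case: a aN ax => [n|k|] aN ax.
    - rewrite sbrL_coef //; case: eqP => [h|_]; last by rewrite mul0r mulr0.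
      exfalso; have [cC dc] := shift_eq eps b0C h.
      have := b0max c cv cC; rewrite dc => hle.
      have hn0 : 0 < sg * n := iaux2 hsg hN0 hle.
      have := iaux3 hsg hle (hmax n ax hn0).
      by move=> nN; move: aN; rewrite nN eqxx.
    - by move/allP: xe => /(_ _ ax).
    - by rewrite sbrC mcoeff0 mulr0.
  by rewrite /= !addr0 (sbrL_coef _ _ _ eC) eqxx mul1r.
have : x@_(SL N) * v@_b0 * kappa eps N b0 != 0.
  rewrite !mulf_neq0 // ?mcoeff_neq0 //.
  by apply/eqP => /(kappa_eq0 b0C); apply: iaux4 hsg hN0 hb0.
by rewrite -h2 h1 eqxx.
Qed.

Lemma iaux5 (sg N : int) : (sg = 1 \/ sg = -1) ->
  sg * (2 * (N + sg)) <= 2 * (sg * N) -> False.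
Proof. by case=> ->; lia. Qed.

Lemma iaux6 (n : int) : n != 0 -> 0 < (if 0 < n then 1 else -1) * n.
Proof. case: ifP => h nz; lia. Qed.

Lemma aut_eig eps th b : is_automorphism eps th ->
  sbracket eps (th << SL 0 >>) (th << b >>) = lam eps b *: th << b >>.
Proof. by case=> hl _ _ hbr; rewrite -hbr sbUU sbr_L0 (linZ hl). Qed.

Lemma step1 eps th n : is_automorphism eps th -> n != 0 ->
  SL n \notin msupp (th << SL 0 >>).
Proof.
move=> ha nz; apply/negP => hn.
have [hl [g hg1 hg2] [he ho] hbr] := ha.
have xe : is_even (th << SL 0 >>) by apply: he; apply: even_U.
pose sg : int := if 0 < n then 1 else -1.
have hsg : sg = 1 \/ sg = -1 by rewrite /sg; case: ifP; [left|right].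
have hsn : 0 < sg * n := iaux6 nz.
have [a [ax Pa amax]] := @exists_max _ (msupp (th << SL 0 >>))
  (fun a => if a is SL m then 0 < sg * m else false)
  (fun a => if a is SL m then sg * m else 0) (ex_intro2 _ _ (SL n) hn hsn).
case: a ax Pa amax => [N|k|] // ax hN0 amax.
have hmax : forall m, SL m \in msupp (th << SL 0 >>) -> 0 < sg * m -> sg * m <= sg * N.
  by move=> m hm hp; exact: (amax (SL m) hm hp).
have ve : forall b, (th << b >>)@_(SL (N + sg)) = 0.
  move=> b; apply: mcoeff_outdom; apply/negP => hin.
  have := top_arg hsg xe ax hN0 hmax (aut_eig b ha) hin isT.
  exact: iaux5.
have := hg2 << SL (N + sg) >>.
move=> /(congr1 (mcoeff (SL (N + sg)))); rewrite (lin_coefE hl) mcoeffUU big1.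
  by move/eqP; rewrite eq_sym oner_eq0.
by move=> b _; rewrite ve mulr0.
Qed.

Lemma nF : (false%:R : CC) = 0. Proof. by []. Qed.
Lemma nT : (true%:R : CC) = 1. Proof. by []. Qed.

Lemma sb0l eps z : sbracket eps 0 z = 0.
Proof. by rewrite /sbracket msupp0 big_nil. Qed.

Lemma sbZl eps (c : CC) x z : sbracket eps (c *: x) z = c *: sbracket eps x z.
Proof. by rewrite -[c *: x]addr0 sb_linl sb0l addr0. Qed.

Lemma sbDl eps x y z : sbracket eps (x + y) z = sbracket eps x z + sbracket eps y z.
Proof. by have := sb_linl eps 1 x y z; rewrite !scale1r. Qed.

Lemma sb0r eps z : sbracket eps z 0 = 0.
Proof.
rewrite /sbracket big1 // => a _; by rewrite msupp0 big_nil.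
Qed.

Lemma sbZr eps (c : CC) x z : sbracket eps z (c *: x) = c *: sbracket eps z x.
Proof. by rewrite -[c *: x]addr0 sb_linr sb0r addr0. Qed.

Lemma sbDr eps x y z : sbracket eps z (x + y) = sbracket eps z x + sbracket eps z y.
Proof. by have := sb_linr eps 1 x y z; rewrite !scale1r. Qed.

Lemma step1b eps th : is_automorphism eps th ->
  th << SL 0 >> = (th << SL 0 >>)@_(SL 0) *: << SL 0 >> + (th << SL 0 >>)@_SC *: << SC >>.
Proof.
move=> ha; have [hl _ [he _] _] := ha.
have xe : is_even (th << SL 0 >>) by apply: he; apply: even_U.
apply/malgP => e; rewrite coef_2; case: e => [n|k|].
- case: (eqVneq n 0) => [->|nz].
    have -> : (SC == SL 0) = false by [].
    by rewrite eqxx nF nT mulr1 mulr0 addr0.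
  rewrite (mcoeff_outdom (step1 ha nz)).
  have -> : (SL 0 == SL n) = false.
    by apply/eqP => -[] /esym /eqP; rewrite (negbTE nz).
  have -> : (SC == SL n) = false by [].
  by rewrite nF mulr0 mulr0 addr0.
- have -> : (SL 0 == SG k) = false by [].
  have -> : (SC == SG k) = false by [].
  by rewrite (@even_coef _ (SG k) xe) // !nF mulr0 mulr0 addr0.
- have -> : (SL 0 == SC) = false by [].
  by rewrite eqxx nF nT mulr0 add0r mulr1.
Qed.

Lemma ad_form eps x (c0 cC : CC) v : x = c0 *: << SL 0 >> + cC *: << SC >> ->
  sbracket eps x v = c0 *: sbracket eps << SL 0 >> v.
Proof. by move=> ->; rewrite sb_linl sbZl sbC scaler0 addr0. Qed.

Lemma ad_form_coef eps (c0 : CC) v e :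
  (c0 *: sbracket eps << SL 0 >> v)@_e = c0 * lam eps e * v@_e.
Proof. by rewrite mcoeffZ sbL0_coef mulrA. Qed.

Lemma eigrel eps th b e : is_automorphism eps th ->
  (th << SL 0 >>)@_(SL 0) * lam eps e * (th << b >>)@_e = lam eps b * (th << b >>)@_e.
Proof.
move=> ha.
have h := aut_eig b ha.
rewrite (ad_form _ _ (step1b ha)) in h.
have := ad_form_coef eps ((th << SL 0 >>)@_(SL 0)) (th << b >>) e.
rewrite h.
rewrite mcoeffZ => <-.
done.
Qed.

Lemma cast_inj (a b : int) : (a%:~R : CC) = b%:~R -> a = b.
Proof. by move/eqP; rewrite eqr_int => /eqP. Qed.

Lemma int_unit (m n : int) : m * n = 1 -> m = 1 \/ m = -1.
Proof.
move=> h; have : (`|m| * `|n| = 1)%N by rewrite -abszM h.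
move/eqP; rewrite muln_eq1 => /andP [/eqP hm _]; lia.
Qed.

Lemma sum_nz (r : seq sbasis) (F : sbasis -> CC) :
  \sum_(b <- r) F b != 0 -> exists b, (b \in r) /\ F b != 0.
Proof.
case: (boolP (has (fun b => F b != 0) r)) => [/hasP [b br Fb]|/hasPn none].
  by move=> _; exists b.
rewrite big1_seq ?eqxx // => b /andP [_ br].
by move: (none b br); rewrite negbK => /eqP.
Qed.

Lemma v_nz eps th b : is_automorphism eps th -> th << b >> != 0.
Proof.
case=> hl hb _ _; apply/eqP => h.
have := bij_inj hb (etrans h (esym (lin0 hl))).
by move/eqP; rewrite monalgU_eq0 oner_eq0.
Qed.

Lemma exists_supp (v : SV) : v != 0 -> exists e, v@_e != 0.
Proof.
move=> nz; have : msupp v != fset0.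
  apply/negP => /eqP h; apply: (negP nz); apply/eqP/malgP => e.
  by rewrite mcoeff0 mcoeff_outdom // h in_fset0.
by move/fset0Pn => [e he]; exists e; rewrite mcoeff_neq0.
Qed.

Lemma eig_cancel eps th b e : is_automorphism eps th -> (th << b >>)@_e != 0 ->
  (th << SL 0 >>)@_(SL 0) * lam eps e = lam eps b.
Proof. move=> ha hv; apply: (mulIf hv); exact: eigrel. Qed.

Lemma c0_pm eps th : is_automorphism eps th ->
  (th << SL 0 >>)@_(SL 0) = 1 \/ (th << SL 0 >>)@_(SL 0) = -1.
Proof.
move=> ha; have [hl [g hg1 hg2] [he ho] hbr] := ha.
set c0 := (th << SL 0 >>)@_(SL 0).
have [b hb] : exists b, (th << b >>)@_(SL 1) != 0.
  have h1 : (th (g << SL 1 >>))@_(SL 1) = 1 by rewrite hg2 mcoeffUU.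
  rewrite (lin_coefE hl) in h1.
  have : \sum_(b <- msupp (g << SL 1 >>)) (g << SL 1 >>)@_b * (th << b >>)@_(SL 1) != 0.
    by rewrite h1 oner_eq0.
  move/sum_nz => [b [_ hb]]; exists b.
  by apply: contraNneq hb => ->; rewrite mulr0.
have E1 := eig_cancel ha hb; rewrite -/c0 in E1.
have [m hm] : exists m : int, c0 = m%:~R.
  case: b hb E1 => [m|k|] hb E1.
  - exists m; move: E1; rewrite /lam mulrN1 => /eqP; rewrite eqr_opp => /eqP.
    by [].
  - by move: hb; rewrite (@odd_coef _ (SL 1)) ?eqxx //; apply: ho; apply: odd_U.
  - exists 0; move: E1; rewrite /lam mulrN1 => /eqP; rewrite oppr_eq0 => /eqP.
    by [].
have [e hv] := exists_supp (v_nz (SL 1) ha).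
have E2 := eig_cancel ha hv; rewrite -/c0 in E2.
have ev : is_even (th << SL 1 >>) by apply: he; apply: even_U.
case: e hv E2 => [n|k|] hv E2.
- move: E2; rewrite /lam hm mulrN => /eqP; rewrite eqr_opp -intrM => /eqP.
  rewrite -[1]/(1%:~R) => /cast_inj /int_unit [] ->; by [left|right].
- by move: hv; rewrite (@even_coef _ (SG k) ev) ?eqxx.
- by move: E2; rewrite /lam mulr0 => /eqP; rewrite eq_sym oppr_eq0 oner_eq0.
Qed.

Definition sgn (f : bool) : CC := if f then -1 else 1.
Definition imL (f : bool) (m : int) : sbasis := SL (if f then - m else m).
Definition imG (eps : bool) (f : bool) (k : int) : sbasis :=
  SG (if f then - k - (eps : nat)%:Z else k).

Lemma c0_sgn eps th : is_automorphism eps th ->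
  exists f, (th << SL 0 >>)@_(SL 0) = sgn f.
Proof. by move=> ha; case: (c0_pm ha) => h; [exists false|exists true]. Qed.

Lemma sgn_lamL f (n m : int) : sgn f * - (n%:~R : CC) = - m%:~R ->
  n = (if f then - m else m).
Proof.
rewrite /sgn; case: f => h; apply: cast_inj; rewrite ?intrN; move: h.
  by rewrite mulN1r opprK.
by rewrite mul1r; exact: oppr_inj.
Qed.

Lemma sgn_lamG eps f (k' k : int) : sgn f * - gidx eps k' = - gidx eps k ->
  k' = (if f then - k - (eps : nat)%:Z else k).
Proof.
rewrite /sgn /gidx; case: f => h; apply: cast_inj.
  move: h; rewrite mulN1r opprK => H.
  have -> : (k'%:~R : CC) = - (k%:~R + hshift eps) - hshift eps by rewrite -H addrK.
  rewrite intrB intrN; case: eps {H} => /=; rewrite /hshift.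
    by rewrite -[((true : nat)%:Z)%:~R]/(1 : CC); field.
  by rewrite -[((false : nat)%:Z)%:~R]/(0 : CC); ring.
by move: h; rewrite mul1r => /oppr_inj /addIr.
Qed.

Lemma monoL eps th f m : is_automorphism eps th ->
  (th << SL 0 >>)@_(SL 0) = sgn f -> m != 0 ->
  th << SL m >> = (th << SL m >>)@_(imL f m) *: << imL f m >>.
Proof.
move=> ha hf mz.
have ev : is_even (th << SL m >>) by case: ha => _ _ [he _] _; apply: he; apply: even_U.
apply/malgP => e; rewrite coef_1.
case: (eqVneq (imL f m) e) => [<-|ne]; first by rewrite nT mulr1.
rewrite nF mulr0; apply/eqP; apply: contraT => hv.
have E := eig_cancel ha hv; rewrite hf in E.
case: e ne hv E => [n|k|] ne hv E.
- by move: ne; rewrite /imL -(sgn_lamL E) eqxx.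
- by move: hv; rewrite (@even_coef _ (SG k) ev) ?eqxx.
- move: E; rewrite /lam mulr0 => /eqP; rewrite eq_sym oppr_eq0 intr_eq0.
  by rewrite (negbTE mz).
Qed.

Lemma monoG eps th f k : is_automorphism eps th ->
  (th << SL 0 >>)@_(SL 0) = sgn f ->
  th << SG k >> = (th << SG k >>)@_(imG eps f k) *: << imG eps f k >>.
Proof.
move=> ha hf.
have ov : is_odd (th << SG k >>) by case: ha => _ _ [_ ho] _; apply: ho; apply: odd_U.
apply/malgP => e; rewrite coef_1.
case: (eqVneq (imG eps f k) e) => [<-|ne]; first by rewrite nT mulr1.
rewrite nF mulr0; apply/eqP; apply: contraT => hv.
have E := eig_cancel ha hv; rewrite hf in E.
case: e ne hv E => [n|k'|] ne hv E.
- by move: hv; rewrite (@odd_coef _ (SL n) ov) ?eqxx.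
- by move: ne; rewrite /imG -(sgn_lamG E) eqxx.
- by move: hv; rewrite (@odd_coef _ SC ov) ?eqxx.
Qed.

Lemma sbr_1m1 eps : sbr eps (SL 1) (SL (-1)) = 2%:R *: << SL 0 >>.
Proof.
rewrite sbrLL.
have -> : (1 + -1 : int) = 0 by [].
by rewrite eqxx mul0r scale0r addr0.
Qed.

Lemma sbr_pm eps f : sbr eps (imL f 1) (imL f (-1)) =
  (if f then - 2%:R else 2%:R) *: << SL 0 >>.
Proof.
case: f; last exact: sbr_1m1.
rewrite /imL sbrLL.
have -> : (- 1 + - - 1 : int) = 0 by [].
rewrite eqxx mul0r scale0r addr0.
by have -> : (- 1 - - - 1 : int) = - 2 by [].
Qed.

Lemma coefSC (x : SV) (a : CC) : 2%:R *: x = a *: << SL 0 >> -> x@_SC = 0.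
Proof.
move=> h; have := coef_1 a (SL 0) SC; rewrite -h mcoeffZ.
have -> : (SL 0 == SC) = false by [].
rewrite nF mulr0 => /eqP; rewrite mulf_eq0 => /orP [|/eqP //].
by rewrite pnatr_eq0.
Qed.

Lemma form_fin (x : SV) (c0 cC s : CC) : x = c0 *: << SL 0 >> + cC *: << SC >> ->
  c0 = s -> cC = 0 -> x = s *: << SL 0 >>.
Proof. by move=> -> -> ->; rewrite scale0r addr0. Qed.

Lemma L0_form eps th f : is_automorphism eps th ->
  (th << SL 0 >>)@_(SL 0) = sgn f -> th << SL 0 >> = sgn f *: << SL 0 >>.
Proof.
move=> ha hf; have [hl hb [he ho] hbr] := ha.
have B := hbr << SL 1 >> << SL (-1) >>.
rewrite sbUU sbr_1m1 (linZ hl) in B.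
have h1 := monoL ha hf (isT : (1 : int) != 0).
have h2 := monoL ha hf (isT : (-1 : int) != 0).
rewrite h1 h2 sbZl sbZr sbUU sbr_pm !scalerA in B.
have hC := coefSC B.
exact: form_fin (step1b ha) hf hC.
Qed.
Lemma gidx_diff eps k : gidx eps k - gidx eps (k - 1) = 1.
Proof. rewrite /gidx; ring. Qed.

Lemma up_nz eps k : (1%:~R / 2%:R - gidx eps k != 0) || (2%:~R / 2%:R - gidx eps (k - 1) != 0).
Proof.
rewrite -negb_and; apply/negP => /andP [/eqP h1 /eqP h2].
have d := gidx_diff eps k.
rewrite -(subr0_eq h1) -(subr0_eq h2) in d.
have : (1%:~R / 2%:R - 2%:~R / 2%:R - 1 : CC) = - 3%:R / 2%:R by field.
rewrite d subrr => /eqP; rewrite eq_sym mulf_eq0 oppr_eq0 invr_eq0 !pnatr_eq0.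
done.
Qed.

Lemma down_nz eps k : ((-1)%:~R / 2%:R - gidx eps (k - 1) != 0) || ((-2)%:~R / 2%:R - gidx eps k != 0).
Proof.
rewrite -negb_and; apply/negP => /andP [/eqP h1 /eqP h2].
have d := gidx_diff eps k.
rewrite -(subr0_eq h1) -(subr0_eq h2) in d.
have : ((-2)%:~R / 2%:R - (-1)%:~R / 2%:R - 1 : CC) = - 3%:R / 2%:R by field.
rewrite d subrr => /eqP; rewrite eq_sym mulf_eq0 oppr_eq0 invr_eq0 !pnatr_eq0.
done.
Qed.

Definition agree (th1 th2 : SV -> SV) z := th1 z = th2 z.

Lemma Ag_br eps th1 th2 p q : is_automorphism eps th1 -> is_automorphism eps th2 ->
  agree th1 th2 p -> agree th1 th2 q -> agree th1 th2 (sbracket eps p q).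
Proof.
case=> _ _ _ b1; case=> _ _ _ b2 hp hq; by rewrite /agree b1 b2 hp hq.
Qed.

Lemma Ag_scale eps th1 th2 (c : CC) z : is_automorphism eps th1 -> is_automorphism eps th2 ->
  c != 0 -> agree th1 th2 (c *: z) -> agree th1 th2 z.
Proof.
case=> l1 _ _ _; case=> l2 _ _ _ hc; rewrite /agree (linZ l1) (linZ l2).
exact: scalerI.
Qed.

Lemma Ag_lin eps th1 th2 (c : CC) p q : is_automorphism eps th1 -> is_automorphism eps th2 ->
  agree th1 th2 p -> agree th1 th2 q -> agree th1 th2 (c *: p + q).
Proof.
case=> l1 _ _ _; case=> l2 _ _ _ hp hq; by rewrite /agree l1 l2 hp hq.
Qed.

Lemma sb_LL eps j m : j + m != 0 ->
  sbracket eps << SL j >> << SL m >> = (j - m)%:~R *: << SL (j + m) >>.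
Proof. by move=> h; rewrite sbUU sbrLL (negbTE h) scale0r addr0. Qed.

Lemma sb_LG eps j k :
  sbracket eps << SL j >> << SG k >> = (j%:~R / 2%:R - gidx eps k) *: << SG (j + k) >>.
Proof. by rewrite sbUU sbrLG. Qed.

Lemma Ag_L_step eps th1 th2 j m t : is_automorphism eps th1 -> is_automorphism eps th2 ->
  j + m = t -> t != 0 -> j - m != 0 ->
  agree th1 th2 << SL j >> -> agree th1 th2 << SL m >> -> agree th1 th2 << SL t >>.
Proof.
move=> a1 a2 <- ht hc aj am.
apply: (Ag_scale a1 a2 (c := (j - m)%:~R)); first by rewrite intr_eq0.
by rewrite -(sb_LL eps ht); exact: Ag_br.
Qed.

Lemma Ag_G_step eps th1 th2 j k t : is_automorphism eps th1 -> is_automorphism eps th2 ->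
  j + k = t -> j%:~R / 2%:R - gidx eps k != 0 ->
  agree th1 th2 << SL j >> -> agree th1 th2 << SG k >> -> agree th1 th2 << SG t >>.
Proof.
move=> a1 a2 <- hc aj ak.
apply: (Ag_scale a1 a2 hc).
by rewrite -(sb_LG eps); exact: Ag_br.
Qed.

Lemma agL_eq th1 th2 m m' : m = m' -> agree th1 th2 << SL m >> -> agree th1 th2 << SL m' >>.
Proof. by move=> ->. Qed.
Lemma agG_eq th1 th2 m m' : m = m' -> agree th1 th2 << SG m >> -> agree th1 th2 << SG m' >>.
Proof. by move=> ->. Qed.

Lemma sb_L2m2 eps : sbracket eps << SL 2 >> << SL (-2) >> =
  (2 - -2)%:~R *: << SL 0 >> + (((2 : int) ^+ 3 - 2)%:~R / 12%:R) *: << SC >>.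
Proof. by rewrite sbUU sbrLL. Qed.

Lemma gen_all eps th1 th2 : is_automorphism eps th1 -> is_automorphism eps th2 ->
  agree th1 th2 << SL 0 >> -> agree th1 th2 << SL 1 >> -> agree th1 th2 << SL (-1) >> ->
  agree th1 th2 << SL 2 >> -> agree th1 th2 << SL (-2) >> ->
  agree th1 th2 << SG 0 >> -> agree th1 th2 << SG (-1) >> ->
  forall b, agree th1 th2 << b >>.
Proof.
move=> a1 a2 h0 h1 hm1 h2 hm2 g0 gm1.
have Lp : forall n : nat, agree th1 th2 << SL (n.+2)%:Z >>.
  elim=> [//|n IH].
  apply: (Ag_L_step a1 a2 (j := 1) (m := (n.+2)%:Z)) => //; try lia.
have Lm : forall n : nat, agree th1 th2 << SL (- (n.+2)%:Z) >>.
  elim=> [//|n IH].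
  apply: (Ag_L_step a1 a2 (j := -1) (m := - (n.+2)%:Z)) => //; lia.
have LC : agree th1 th2 << SC >>.
  have cnz : (((2 : int) ^+ 3 - 2)%:~R / 12%:R : CC) != 0.
    by rewrite mulf_neq0 ?invr_eq0 ?pnatr_eq0 ?intr_eq0.
  apply: (Ag_scale a1 a2 cnz).
  have -> : (((2 : int) ^+ 3 - 2)%:~R / 12%:R) *: << SC >> =
      (- (2 - -2)%:~R) *: << SL 0 >> + sbracket eps << SL 2 >> << SL (-2) >>.
    by rewrite sb_L2m2 addrA scaleNr addNr add0r.
  apply: (Ag_lin _ a1 a2 h0); exact: (Ag_br a1 a2 h2 hm2).
have Gp : forall n : nat, agree th1 th2 << SG n%:Z >> /\ agree th1 th2 << SG (n%:Z - 1) >>.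
  elim=> [|n [IH1 IH2]]; first by split.
  split; last by apply: (agG_eq _ IH1); lia.
  case/orP: (up_nz eps n) => hc.
    by apply: (Ag_G_step a1 a2 _ hc) => //; lia.
  by apply: (Ag_G_step a1 a2 _ hc) => //; lia.
have Gm : forall n : nat, agree th1 th2 << SG (- n%:Z) >> /\ agree th1 th2 << SG (- n%:Z - 1) >>.
  elim=> [|n [IH1 IH2]]; first by split.
  split; first by apply: (agG_eq _ IH2); lia.
  case/orP: (down_nz eps (- n%:Z)) => hc.
    by apply: (Ag_G_step a1 a2 _ hc) => //; lia.
  by apply: (Ag_G_step a1 a2 _ hc) => //; lia.
case=> [m|k|]; last exact: LC.
- case: m => [[|[|n]]|[|n]].
  + exact: h0.
  + exact: h1.
  + exact: Lp.
  + exact: hm1.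
  + by apply: (agL_eq _ (Lm n)); rewrite NegzE.
- case: k => [n|n]; first by case: (Gp n).
  by apply: (agG_eq _ (proj2 (Gm n))); rewrite NegzE; lia.
Qed.
Lemma coef_7 (a1 a2 a3 a4 a5 a6 a7 : CC) b1 b2 b3 b4 b5 b6 b7 e :
  (a1 *: << b1 >> + a2 *: << b2 >> + a3 *: << b3 >> + a4 *: << b4 >>
   + a5 *: << b5 >> + a6 *: << b6 >> + a7 *: << b7 >> : SV)@_e =
  a1 * (b1 == e)%:R + a2 * (b2 == e)%:R + a3 * (b3 == e)%:R + a4 * (b4 == e)%:R
  + a5 * (b5 == e)%:R + a6 * (b6 == e)%:R + a7 * (b7 == e)%:R.
Proof.
rewrite !mcoeffD.
rewrite -(coef_1 a1) -(coef_1 a2) -(coef_1 a3) -(coef_1 a4) -(coef_1 a5) -(coef_1 a6) -(coef_1 a7).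
done.
Qed.

Definition Vx (eps f : bool) (c1 c2 c3 c4 c5 c6 : CC) : SV :=
  sgn f *: << SL 0 >> + c1 *: << imL f 1 >> + c2 *: << imL f (-1) >>
  + c3 *: << imL f 2 >> + c4 *: << imL f (-2) >> + c5 *: << imG eps f 0 >>
  + c6 *: << imG eps f (-1) >>.


Lemma Vx0 eps f c1 c2 c3 c4 c5 c6 : (Vx eps f c1 c2 c3 c4 c5 c6)@_(SL 0) = sgn f.
Proof.
rewrite /Vx coef_7; destruct eps, f; rewrite /imL /imG /=.
all: by move=> *; rewrite ?nF ?nT ?mulr0 ?mulr1 ?addr0 ?add0r.
Qed.

Lemma Vx1 eps f c1 c2 c3 c4 c5 c6 : (Vx eps f c1 c2 c3 c4 c5 c6)@_(imL f 1) = c1.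
Proof.
rewrite /Vx coef_7; destruct eps, f; rewrite /imL /imG /=.
all: by move=> *; rewrite ?nF ?nT ?mulr0 ?mulr1 ?addr0 ?add0r.
Qed.

Lemma Vxm1 eps f c1 c2 c3 c4 c5 c6 : (Vx eps f c1 c2 c3 c4 c5 c6)@_(imL f (-1)) = c2.
Proof.
rewrite /Vx coef_7; destruct eps, f; rewrite /imL /imG /=.
all: by move=> *; rewrite ?nF ?nT ?mulr0 ?mulr1 ?addr0 ?add0r.
Qed.

Lemma Vx2 eps f c1 c2 c3 c4 c5 c6 : (Vx eps f c1 c2 c3 c4 c5 c6)@_(imL f 2) = c3.
Proof.
rewrite /Vx coef_7; destruct eps, f; rewrite /imL /imG /=.
all: by move=> *; rewrite ?nF ?nT ?mulr0 ?mulr1 ?addr0 ?add0r.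
Qed.

Lemma Vxm2 eps f c1 c2 c3 c4 c5 c6 : (Vx eps f c1 c2 c3 c4 c5 c6)@_(imL f (-2)) = c4.
Proof.
rewrite /Vx coef_7; destruct eps, f; rewrite /imL /imG /=.
all: by move=> *; rewrite ?nF ?nT ?mulr0 ?mulr1 ?addr0 ?add0r.
Qed.

Lemma Vxg0 eps f c1 c2 c3 c4 c5 c6 : (Vx eps f c1 c2 c3 c4 c5 c6)@_(imG eps f 0) = c5.
Proof.
rewrite /Vx coef_7; destruct eps, f; rewrite /imL /imG /=.
all: by move=> *; rewrite ?nF ?nT ?mulr0 ?mulr1 ?addr0 ?add0r.
Qed.

Lemma Vxgm1 eps f c1 c2 c3 c4 c5 c6 : (Vx eps f c1 c2 c3 c4 c5 c6)@_(imG eps f (-1)) = c6.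
Proof.
rewrite /Vx coef_7; destruct eps, f; rewrite /imL /imG /=.
all: by move=> *; rewrite ?nF ?nT ?mulr0 ?mulr1 ?addr0 ?add0r.
Qed.

Definition x1 : SV := << SL 0 >> + << SL 1 >> + << SL (-1) >> + << SL 2 >>
  + << SL (-2) >> + << SG 0 >> + << SG (-1) >>.

Lemma aut_Vx eps th : is_automorphism eps th -> exists f c1 c2 c3 c4 c5 c6,
  th x1 = Vx eps f c1 c2 c3 c4 c5 c6 /\ th << SL 0 >> = sgn f *: << SL 0 >> /\
  th << SL 1 >> = c1 *: << imL f 1 >> /\ th << SL (-1) >> = c2 *: << imL f (-1) >> /\
  th << SL 2 >> = c3 *: << imL f 2 >> /\ th << SL (-2) >> = c4 *: << imL f (-2) >> /\
  th << SG 0 >> = c5 *: << imG eps f 0 >> /\ th << SG (-1) >> = c6 *: << imG eps f (-1) >>.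
Proof.
move=> ha; have [hl _ _ _] := ha; have [f hf] := c0_sgn ha.
have e0 := L0_form ha hf.
have [c1 e1] : exists c, th << SL 1 >> = c *: << imL f 1 >>.
  by eexists; apply: (monoL ha hf).
have [c2 e2] : exists c, th << SL (-1) >> = c *: << imL f (-1) >>.
  by eexists; apply: (monoL ha hf).
have [c3 e3] : exists c, th << SL 2 >> = c *: << imL f 2 >>.
  by eexists; apply: (monoL ha hf).
have [c4 e4] : exists c, th << SL (-2) >> = c *: << imL f (-2) >>.
  by eexists; apply: (monoL ha hf).
have [c5 e5] : exists c, th << SG 0 >> = c *: << imG eps f 0 >>.
  by eexists; apply: (monoG _ ha hf).
have [c6 e6] : exists c, th << SG (-1) >> = c *: << imG eps f (-1) >>.
  by eexists; apply: (monoG _ ha hf).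
exists f, c1, c2, c3, c4, c5, c6.
split; last exact: (conj e0 (conj e1 (conj e2 (conj e3 (conj e4 (conj e5 e6)))))).
by rewrite /x1 !(linD hl) e0 e1 e2 e3 e4 e5 e6.
Qed.

Lemma sgn_inj f f' : sgn f = sgn f' -> f = f'.
Proof.
case: f; case: f' => //= h.
  by have := @cast_inj (-1) 1 h.
by have := @cast_inj 1 (-1) h.
Qed.

Lemma sep eps th1 th2 : is_automorphism eps th1 -> is_automorphism eps th2 ->
  th1 x1 = th2 x1 -> forall y, th1 y = th2 y.
Proof.
move=> a1 a2 E.
have [f [c1 [c2 [c3 [c4 [c5 [c6 [V1 [L0a [L1a [Lm1a [L2a [Lm2a [G0a Gm1a]]]]]]]]]]]]]] := aut_Vx a1.
have [f' [d1 [d2 [d3 [d4 [d5 [d6 [V2 [L0b [L1b [Lm1b [L2b [Lm2b [G0b Gm1b]]]]]]]]]]]]]] := aut_Vx a2.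
rewrite V1 V2 in E.
have hf : f = f'.
  by apply: sgn_inj; have := Vx0 eps f c1 c2 c3 c4 c5 c6; rewrite E Vx0.
subst f'.
have h1 : c1 = d1 by have := Vx1 eps f c1 c2 c3 c4 c5 c6; rewrite E Vx1.
have h2 : c2 = d2 by have := Vxm1 eps f c1 c2 c3 c4 c5 c6; rewrite E Vxm1.
have h3 : c3 = d3 by have := Vx2 eps f c1 c2 c3 c4 c5 c6; rewrite E Vx2.
have h4 : c4 = d4 by have := Vxm2 eps f c1 c2 c3 c4 c5 c6; rewrite E Vxm2.
have h5 : c5 = d5 by have := Vxg0 eps f c1 c2 c3 c4 c5 c6; rewrite E Vxg0.
have h6 : c6 = d6 by have := Vxgm1 eps f c1 c2 c3 c4 c5 c6; rewrite E Vxgm1.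
have ag := gen_all a1 a2.
have ag' : forall b, agree th1 th2 << b >>.
  apply: ag; rewrite /agree.
  - rewrite L0a L0b; reflexivity.
  - rewrite L1a L1b h1; reflexivity.
  - rewrite Lm1a Lm1b h2; reflexivity.
  - rewrite L2a L2b h3; reflexivity.
  - rewrite Lm2a Lm2b h4; reflexivity.
  - rewrite G0a G0b h5; reflexivity.
  - rewrite Gm1a Gm1b h6; reflexivity.
have [hl1 _ _ _] := a1; have [hl2 _ _ _] := a2.
move=> y; rewrite (linE hl1) (linE hl2); apply: lin_Fext => b; exact: ag'.
Qed.

Theorem theorem5p2 (eps : bool) (phi : SV -> SV) :
  is_2local_automorphism eps phi -> is_automorphism eps phi.
Proof.
move=> h2.
have [th [ha [hx _]]] := h2 x1 x1.
have eq : forall y, phi y = th y.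
  move=> y; have [th' [ha' [hx' hy']]] := h2 x1 y.
  rewrite hy'; apply: (sep ha' ha); by rewrite -hx' hx.
have [hl hb [he ho] hbr] := ha.
split.
- by move=> c x y; rewrite !eq hl.
- case: hb => g g1 g2; exists g => x; by rewrite eq ?g1 ?g2.
- by split => x; rewrite eq; [exact: he | exact: ho].
- by move=> x y; rewrite !eq hbr.
Qed.
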